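(* Let $\mathbf D_0\in\mathbb R^{m\times p}$ be a dictionary with unit-norm columns and $k$ such that $\delta_k(\mathbf D_0)<1$. For $t<\sqrt{1-\delta_k(\mathbf D_0)}$ define $C_t\triangleq\frac{1}{\sqrt{1-\delta_k(\mathbf D_0)}-t}$. For any $\mathbf W\in\mathcal W_{\mathbf D_0}$, $\mathbf v\in\mathcal S^p$, $0\le t'\le t$ and $J$ with $|J|=k$, the matrix $\boldsymbol\Theta_J(t')\triangleq\big(\mathbf D_J^\top(t')\mathbf D_J(t')\big)^{-1}$ is well defined and $$|||\mathbf D_J(t')|||_2=|||\mathbf D_J^\top(t')|||_2\le C_t,\qquad |||\boldsymbol\Theta_J(t')|||_2\le C_t^2,\qquad |||\mathbf D_J(t')\boldsymbol\Theta_J(t')|||_2\le C_t,$$ where $\mathbf D_J(t')$ denotes the columns of $\mathbf D(\mathbf W,\mathbf v,t')$ indexed by $J$.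
   Context: $\delta_k(\mathbf D)$ (restricted isometry constant) is the smallest $\delta$ such that $(1-\delta)\|\mathbf z\|_2^2\le\|\mathbf D_J\mathbf z\|_2^2\le(1+\delta)\|\mathbf z\|_2^2$ for all $J$ with $|J|=k$ and $\mathbf z\in\mathbb R^k$. $\mathcal S^p$ unit sphere; $\mathcal W_{\mathbf D_0}=\{\mathbf W:\mathrm{diag}(\mathbf W^\top\mathbf D_0)=\mathbf 0,\mathrm{diag}(\mathbf W^\top\mathbf W)=\mathbf 1\}$; $\mathbf D(\mathbf W,\mathbf v,t)=\mathbf D_0\mathrm{Diag}[\cos(\mathbf vt)]+\mathbf W\mathrm{Diag}[\sin(\mathbf vt)]$. $|||\cdot|||_2$ spectral norm. *)

(* Defs.v *)
From HB Require Import structures.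
From mathcomp Require Import all_boot all_order all_algebra.
From mathcomp Require Import all_classical all_reals all_analysis.
Set Implicit Arguments. Unset Strict Implicit. Unset Printing Implicit Defensive.
Import Order.TTheory GRing.Theory Num.Theory.
Local Open Scope ring_scope.
Local Open Scope classical_set_scope.

Section Defs.
Variable R : realType.

Definition norm2 n (x : 'cV[R]_n) : R := Num.sqrt (\sum_i x i 0 ^+ 2).

Definition specnorm a b (A : 'M[R]_(a, b)) : R :=
  sup [set norm2 (A *m x) | x in [set x : 'cV[R]_b | norm2 x = 1]].

(* D_J : the columns of D indexed by J (in increasing order of enum) *)
Definition subcols m p (D : 'M[R]_(m, p)) (J : {set 'I_p}) : 'M[R]_(m, #|J|) :=
  colsub (fun i : 'I_#|J| => enum_val i) D.

Definition rip_bound m p (D : 'M[R]_(m, p)) (k : nat) (delta : R) : Prop :=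
  forall J : {set 'I_p}, #|J| = k -> forall z : 'cV[R]_#|J|,
    (1 - delta) * norm2 z ^+ 2 <= norm2 (subcols D J *m z) ^+ 2 /\
    norm2 (subcols D J *m z) ^+ 2 <= (1 + delta) * norm2 z ^+ 2.

Definition RIC m p (D : 'M[R]_(m, p)) (k : nat) : R :=
  inf [set delta | 0 <= delta /\ rip_bound D k delta].

Definition unit_columns m p (D : 'M[R]_(m, p)) : Prop :=
  forall j : 'I_p, norm2 (col j D) = 1.

Definition in_WD0 m p (D0 W : 'M[R]_(m, p)) : Prop :=
  (forall j : 'I_p, (W^T *m D0) j j = 0) /\ (forall j : 'I_p, (W^T *m W) j j = 1).

Definition Dpath m p (D0 W : 'M[R]_(m, p)) (v : 'cV[R]_p) (t : R) : 'M[R]_(m, p) :=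
  D0 *m diag_mx (\row_j cos (v j 0 * t)) + W *m diag_mx (\row_j sin (v j 0 * t)).

Definition Ct m p (D0 : 'M[R]_(m, p)) (k : nat) (t : R) : R :=
  (Num.sqrt (1 - RIC D0 k) - t)^-1.

End Defs.

(* Main.v *)
Require Import Defs.
From HB Require Import structures.
From mathcomp Require Import all_boot all_order all_algebra.
From mathcomp Require Import all_classical all_reals all_analysis.
From mathcomp Require Import ring lra.
Import Order.TTheory GRing.Theory Num.Theory.
Set Implicit Arguments. Unset Strict Implicit. Unset Printing Implicit Defensive.
Local Open Scope ring_scope.

Section Aux.
Variable R : realType.
Local Open Scope classical_set_scope.

Definition dot n (x y : 'cV[R]_n) : R := (x^T *m y) 0 0.

Lemma dotE n (x y : 'cV[R]_n) : dot x y = \sum_i x i 0 * y i 0.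
Proof. by rewrite /dot mxE; apply: eq_bigr => i _; rewrite mxE. Qed.

Lemma dotC n (x y : 'cV[R]_n) : dot x y = dot y x.
Proof. by rewrite !dotE; apply: eq_bigr => i _; rewrite mulrC. Qed.

Lemma dot_ge0 n (x : 'cV[R]_n) : 0 <= dot x x.
Proof. by rewrite dotE; apply: sumr_ge0 => i _; rewrite -expr2 sqr_ge0. Qed.

Lemma norm2E n (x : 'cV[R]_n) : norm2 x = Num.sqrt (dot x x).
Proof. by rewrite /norm2 dotE; congr Num.sqrt; apply: eq_bigr => i _; rewrite expr2. Qed.

Lemma norm2_ge0 n (x : 'cV[R]_n) : 0 <= norm2 x.
Proof. by rewrite norm2E sqrtr_ge0. Qed.

Lemma norm2_sq n (x : 'cV[R]_n) : norm2 x ^+ 2 = dot x x.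
Proof. by rewrite norm2E sqr_sqrtr // dot_ge0. Qed.

Lemma sq_le (u v : R) : 0 <= v -> u ^+ 2 <= v ^+ 2 -> u <= v.
Proof. move=> h1 h2; nra. Qed.

Lemma dot_mull m n (A : 'M[R]_(m, n)) x y : dot (A *m x) y = dot x (A^T *m y).
Proof. by rewrite /dot trmx_mul mulmxA. Qed.

Lemma dotDl n (x y z : 'cV[R]_n) : dot (x + y) z = dot x z + dot y z.
Proof. by rewrite !dotE -big_split; apply: eq_bigr => i _; rewrite mxE mulrDl. Qed.

Lemma dotZl n c (x y : 'cV[R]_n) : dot (c *: x) y = c * dot x y.
Proof. by rewrite !dotE mulr_sumr; apply: eq_bigr => i _; rewrite mxE mulrA. Qed.

Lemma CS_sum n (a b : 'I_n -> R) :
  (\sum_i a i * b i) ^+ 2 <= (\sum_i a i ^+ 2) * (\sum_i b i ^+ 2).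
Proof.
set A := \sum_i a i ^+ 2; set B := \sum_i b i ^+ 2; set C := \sum_i a i * b i.
have B0 : 0 <= B by apply: sumr_ge0 => i _; rewrite sqr_ge0.
have key : 0 <= B * (A * B - C ^+ 2).
  have -> : B * (A * B - C ^+ 2) = \sum_i (B * a i - C * b i) ^+ 2.
    rewrite (eq_bigr (fun i => B ^+ 2 * a i ^+ 2 - (2 * B * C) * (a i * b i) + C ^+ 2 * b i ^+ 2));
      last by move=> i _; ring.
    rewrite big_split /= sumrB -!mulr_sumr -/A -/B -/C; ring.
  by apply: sumr_ge0 => i _; rewrite sqr_ge0.
case: (ltrgt0P B) => [Bp|Bn|B00]; last 2 first.
- by move: B0; rewrite leNgt Bn.
- have b0 : forall i, b i = 0.
    move=> i; apply/eqP; rewrite -sqrf_eq0; apply/eqP.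
    by apply: (psumr_eq0P _ B00) => // j _; rewrite sqr_ge0.
  rewrite /C big1 ?expr0n /=; last by move=> i _; rewrite b0 mulr0.
  by rewrite B00 mulr0.
- nra.
Qed.

Lemma dot_le n (x y : 'cV[R]_n) : dot x y <= norm2 x * norm2 y.
Proof.
apply: sq_le; first by rewrite mulr_ge0 // norm2_ge0.
by rewrite exprMn !norm2_sq !dotE; apply: CS_sum.
Qed.


Lemma norm2_triangle n (x y : 'cV[R]_n) : norm2 (x + y) <= norm2 x + norm2 y.
Proof.
apply: sq_le; first by rewrite addr_ge0 // norm2_ge0.
rewrite norm2_sq dotDl (dotC x) (dotC y) !dotDl (dotC y x) -!norm2_sq.
have := dot_le x y; nra.
Qed.

Lemma norm2_scale n c (x : 'cV[R]_n) : norm2 (c *: x) = `|c| * norm2 x.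
Proof.
rewrite !norm2E dotZl dotC dotZl mulrA -expr2 sqrtrM ?sqr_ge0 //.
by rewrite sqrtr_sqr.
Qed.

Lemma norm2_opp n (x : 'cV[R]_n) : norm2 (- x) = norm2 x.
Proof. by rewrite -scaleN1r norm2_scale normrN normr1 mul1r. Qed.

Lemma norm2_eq0 n (x : 'cV[R]_n) : norm2 x = 0 -> x = 0.
Proof.
move=> h; have : dot x x = 0 by rewrite -norm2_sq h expr0n.
rewrite dotE => H; apply/matrixP => i j; rewrite ord1 mxE.
apply/eqP; rewrite -sqrf_eq0 expr2; apply/eqP.
by apply: (psumr_eq0P _ H) => // k _; rewrite -expr2 sqr_ge0.
Qed.

Lemma norm2_0 n : norm2 (0 : 'cV[R]_n) = 0.
Proof. by rewrite /norm2 big1 ?sqrtr0 // => i _; rewrite mxE expr0n. Qed.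

Definition frob m n (A : 'M[R]_(m, n)) : R := \sum_j \sum_i A i j ^+ 2.

Lemma norm2_mul_le m n (A : 'M[R]_(m, n)) x :
  norm2 (A *m x) ^+ 2 <= frob A * norm2 x ^+ 2.
Proof.
rewrite norm2_sq norm2_sq !dotE /frob exchange_big /= mulr_suml.
apply: ler_sum => i _; rewrite !mxE -expr2.
have := CS_sum (fun j => A i j) (fun j => x j 0).
have -> : \sum_i0 x i0 0 * x i0 0 = \sum_i0 x i0 0 ^+ 2 by apply: eq_bigr => j _; rewrite expr2.
done.
Qed.

Lemma frob_ge0 m n (A : 'M[R]_(m, n)) : 0 <= frob A.
Proof. by apply: sumr_ge0 => j _; apply: sumr_ge0 => i _; rewrite sqr_ge0. Qed.

Definition Sset m n (A : 'M[R]_(m, n)) :=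
  [set norm2 (A *m x) | x in [set x : 'cV[R]_n | norm2 x = 1]].

Lemma Sset_has_sup m n (A : 'M[R]_(m, n)) : (exists x : 'cV[R]_n, norm2 x = 1) -> has_sup (Sset A).
Proof.
move=> [x hx]; split; first by exists (norm2 (A *m x)); exists x.
exists (Num.sqrt (frob A)) => _ [y /= hy <-].
apply: (@sq_le (norm2 (A *m y))); first exact: sqrtr_ge0.
rewrite (sqr_sqrtr (frob_ge0 A)). move: (norm2_mul_le A y). by rewrite hy expr1n mulr1.
Qed.

Lemma spec_ub m n (A : 'M[R]_(m, n)) x : norm2 (A *m x) <= specnorm A * norm2 x.
Proof.
have [x0|xn0] := eqVneq (norm2 x) 0.
  by rewrite (norm2_eq0 x0) mulmx0 !norm2_0 mulr0.
have xp : 0 < norm2 x by rewrite lt_def xn0 norm2_ge0.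
set u := (norm2 x)^-1 *: x.
have hu : norm2 u = 1 by rewrite norm2_scale ger0_norm ?invr_ge0 ?norm2_ge0 // mulVf.
have hs := Sset_has_sup A (ex_intro _ u hu).
have : norm2 (A *m u) <= specnorm A.
  by apply: (sup_upper_bound hs); exists u.
rewrite -scalemxAr norm2_scale ger0_norm ?invr_ge0 ?norm2_ge0 //.
rewrite ler_pdivrMl // => h; by rewrite mulrC.
Qed.

Lemma spec_ge0 m n (A : 'M[R]_(m, n)) : 0 <= specnorm A.
Proof.
have [[x hx]|nx] := pselect (exists x : 'cV[R]_n, norm2 x = 1).
  by have := spec_ub A x; rewrite hx mulr1; apply: le_trans; apply: norm2_ge0.
rewrite /specnorm (_ : [set _ | _ in _] = set0) ?sup0 //.
by apply/seteqP; split => // _ [y /= hy _]; apply: nx; exists y.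
Qed.

Lemma spec_le m n (A : 'M[R]_(m, n)) c : 0 <= c ->
  (forall x, norm2 x = 1 -> norm2 (A *m x) <= c) -> specnorm A <= c.
Proof.
move=> c0 h.
have [[x hx]|nx] := pselect (exists x : 'cV[R]_n, norm2 x = 1).
  apply: ge_sup; first by exists (norm2 (A *m x)); exists x.
  by move=> _ [y /= hy <-]; apply: h.
rewrite /specnorm (_ : [set _ | _ in _] = set0) ?sup0 //.
by apply/seteqP; split => // _ [y /= hy _]; apply: nx; exists y.
Qed.

Lemma spec_tr_le m n (A : 'M[R]_(m, n)) : specnorm A <= specnorm A^T.
Proof.
apply: spec_le; first exact: spec_ge0.
move=> x hx; set y := A *m x.
have h1 : norm2 y ^+ 2 <= specnorm A^T * norm2 y.
  rewrite norm2_sq {1}/y dot_mull; apply: le_trans (dot_le _ _) _.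
  by rewrite hx mul1r spec_ub.
have := norm2_ge0 y; have := spec_ge0 A^T; nra.
Qed.

Lemma spec_tr m n (A : 'M[R]_(m, n)) : specnorm A = specnorm A^T.
Proof. by apply/eqP; rewrite eq_le spec_tr_le -{2}(trmxK A) spec_tr_le. Qed.

End Aux.

Section Trig.
Variable R : realType.
Local Open Scope classical_set_scope.

Lemma abs_sin_le_pos (y : R) : 0 <= y -> `|sin y| <= y.
Proof.
move=> y0.
have [] := @MVT_segment R sin cos 0 y y0 (fun c _ => is_derive_sin c).
  by apply: derivable_within_continuous => z _; exact: ex_derive.
move=> c _ h.
move: h; rewrite sin0 subr0 subr0 => ->.
by rewrite normrM (ger0_norm y0) ler_piMl // cos_max.
Qed.

Lemma abs_sin_le (y : R) : `|sin y| <= `|y|.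
Proof.
have [y0|y0] := leP 0 y; first by rewrite (ger0_norm y0) abs_sin_le_pos.
by rewrite -normrN -sinN (ltr0_norm y0) abs_sin_le_pos // oppr_ge0 ltW.
Qed.

Lemma one_sub_cos (x : R) : 2 - 2 * cos x <= x ^+ 2.
Proof.
have -> : x = (x / 2) *+ 2 by rewrite -mulr_natr divfK // pnatr_eq0.
rewrite cos_mulr2n.
have := abs_sin_le (x / 2); have := cos2Dsin2 (x / 2).
set s := sin (x / 2); set c := cos (x / 2); set y := x / 2 => h1 h2.
have h3 : s ^+ 2 <= y ^+ 2 by rewrite -real_normK ?num_real // -(real_normK (num_real y)) ler_sqr // normr_ge0.
rewrite -mulr_natr; nra.
Qed.
End Trig.

Section Main.
Variable R : realType.
Local Open Scope classical_set_scope.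

Lemma sumsq_norm1 n (x : 'cV[R]_n) : norm2 x = 1 -> \sum_i x i 0 ^+ 2 = 1.
Proof.
move=> h; have := norm2_sq x; rewrite h expr1n dotE => ->.
by apply: eq_bigr => i _; rewrite expr2.
Qed.

Lemma col_sum m p (D0 : 'M[R]_(m, p)) j : unit_columns D0 -> \sum_i D0 i j ^+ 2 = 1.
Proof.
move=> uc; rewrite -(sumsq_norm1 (uc j)); apply: eq_bigr => i _; by rewrite mxE.
Qed.

Lemma subcolsE m p (D : 'M[R]_(m, p)) J i j : subcols D J i j = D i (enum_val j).
Proof. by rewrite /subcols mxE. Qed.

Lemma frob_sub0 m p (D0 : 'M[R]_(m, p)) J : unit_columns D0 -> frob (subcols D0 J) = #|J|%:R.
Proof.
move=> uc; rewrite /frob (eq_bigr (fun _ => 1)) ?sumr_const ?card_ord //.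
move=> j _; rewrite -(col_sum (enum_val j) uc); apply: eq_bigr => i _; by rewrite subcolsE.
Qed.

Lemma RIP_RIC m p (D0 : 'M[R]_(m, p)) k (J : {set 'I_p}) : unit_columns D0 -> #|J| = k ->
  0 <= RIC D0 k /\ forall z,
  (1 - RIC D0 k) * norm2 z ^+ 2 <= norm2 (subcols D0 J *m z) ^+ 2 /\
  norm2 (subcols D0 J *m z) ^+ 2 <= (1 + RIC D0 k) * norm2 z ^+ 2.
Proof.
move=> uc hJ.
set S := [set delta | 0 <= delta /\ rip_bound D0 k delta].
have wit : S (k%:R + 1).
  split; first by rewrite addr_ge0 ?ler0n.
  move=> J' hJ' z; have := norm2_mul_le (subcols D0 J') z.
  rewrite frob_sub0 // => h; have hk : (#|J'|%:R : R) = k%:R by rewrite hJ'.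
  rewrite hk in h; have := norm2_ge0 z; have := ler0n R k; split; nra.
have ne : nonempty S by exists (k%:R + 1).
split; first by apply: lb_le_inf => // d [].
move=> z; set a := norm2 z ^+ 2; set b := norm2 (subcols D0 J *m z) ^+ 2.
have a0 : 0 <= a by rewrite sqr_ge0.
have b0 : 0 <= b by rewrite sqr_ge0.
have [az|ap] := eqVneq a 0.
  have [_ /(_ J hJ z) [_ h]] := wit.
  rewrite -/a -/b az !mulr0 in h *; split; lra.
have ap' : 0 < a by rewrite lt_def ap a0.
split.
- have : 1 - b / a <= RIC D0 k.
    apply: lb_le_inf => // d [d0 /(_ J hJ z) [h _]].
    rewrite lerBlDr -lerBlDl ler_pdivlMr //.
  by rewrite lerBlDr -lerBlDl ler_pdivlMr.
- have : b / a - 1 <= RIC D0 k.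
    apply: lb_le_inf => // d [d0 /(_ J hJ z) [_ h]].
    by rewrite lerBlDl ler_pdivrMr // mulrC.
  by rewrite lerBlDl ler_pdivrMr // mulrC.
Qed.


Lemma Dpath_entry m p (D0 W : 'M[R]_(m, p)) v t i e :
  Dpath D0 W v t i e = D0 i e * cos (v e 0 * t) + W i e * sin (v e 0 * t).
Proof. by rewrite /Dpath !mul_mx_diag !mxE. Qed.

Lemma col_err m p (D0 W : 'M[R]_(m, p)) v t e :
  unit_columns D0 -> in_WD0 D0 W ->
  \sum_i (Dpath D0 W v t i e - D0 i e) ^+ 2 = 2 - 2 * cos (v e 0 * t).
Proof.
move=> uc [hWD hWW].
set c := cos (v e 0 * t); set s := sin (v e 0 * t).
have h1 := col_sum e uc.
have h2 : \sum_i D0 i e * W i e = 0.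
  have := hWD e; rewrite mxE => h; apply: eq_trans h; apply: eq_bigr => i _; by rewrite mxE mulrC.
have h3 : \sum_i W i e ^+ 2 = 1.
  have := hWW e; rewrite mxE => h; apply: eq_trans h; apply: eq_bigr => i _; by rewrite mxE expr2.
rewrite (eq_bigr (fun i => (c - 1) ^+ 2 * D0 i e ^+ 2 + (2 * (c - 1) * s) * (D0 i e * W i e) + s ^+ 2 * W i e ^+ 2)); last first.
  by move=> i _; rewrite Dpath_entry -/c -/s; ring.
rewrite !big_split /= -!mulr_sumr h1 h2 h3.
have := cos2Dsin2 (v e 0 * t); rewrite -/c -/s => hcs.
rewrite mulr0 addr0 !mulr1; nra.
Qed.

Lemma frob_err m p (D0 W : 'M[R]_(m, p)) (v : 'cV[R]_p) t (J : {set 'I_p}) :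
  unit_columns D0 -> in_WD0 D0 W -> norm2 v = 1 ->
  frob (subcols (Dpath D0 W v t) J - subcols D0 J) <= t ^+ 2.
Proof.
move=> uc hW hv.
rewrite /frob.
have -> : \sum_j \sum_i (subcols (Dpath D0 W v t) J - subcols D0 J) i j ^+ 2
   = \sum_(j < #|J|) (2 - 2 * cos (v (enum_val j) 0 * t)).
  apply: eq_bigr => j _; rewrite -(col_err v t (enum_val j) uc hW); apply: eq_bigr => i _.
  by rewrite !mxE.
apply: (@le_trans _ _ (\sum_(j < #|J|) (v (enum_val j) 0 ^+ 2 * t ^+ 2))).
  by apply: ler_sum => j _; rewrite -exprMn one_sub_cos.
rewrite -(big_enum_val (A := mem J) (fun l => v l 0 ^+ 2 * t ^+ 2)) -mulr_suml.
rewrite -[X in _ <= X]mul1r ler_wpM2r ?sqr_ge0 //.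
rewrite -(sumsq_norm1 hv) big_mkcond /=; apply: ler_sum => l _.
by case: (l \in J) => //; rewrite sqr_ge0.
Qed.

End Main.

Theorem lemma5 (R : realType) (m p k : nat) (D0 : 'M[R]_(m, p)) (t : R) :
  unit_columns D0 ->
  RIC D0 k < 1 ->
  t < Num.sqrt (1 - RIC D0 k) ->
  forall (W : 'M[R]_(m, p)) (v : 'cV[R]_p) (t' : R) (J : {set 'I_p}),
    in_WD0 D0 W -> norm2 v = 1 -> 0 <= t' -> t' <= t -> #|J| = k ->
    let DJ := subcols (Dpath D0 W v t') J in
    let Theta := invmx (DJ^T *m DJ) in
    (DJ^T *m DJ) \in unitmx /\
    specnorm DJ = specnorm DJ^T /\
    specnorm DJ <= Ct D0 k t /\
    specnorm Theta <= Ct D0 k t ^+ 2 /\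
    specnorm (DJ *m Theta) <= Ct D0 k t.
Proof.
move=> uc hd1 ht W v t' J hW hv t0 tt hJ DJ Theta.
have [d0 rip] := RIP_RIC uc hJ.
set d := RIC D0 k in hd1 ht d0 rip *.
set b := Num.sqrt (1 - d); set a := Num.sqrt (1 + d).
have b0 : 0 <= b by apply: sqrtr_ge0.
have a0 : 0 <= a by apply: sqrtr_ge0.
have bb : b ^+ 2 = 1 - d by rewrite sqr_sqrtr // subr_ge0 ltW.
have aa : a ^+ 2 = 1 + d by rewrite sqr_sqrtr // addr_ge0.
set D0J := subcols D0 J.
set E := DJ - D0J.
have DJE z : DJ *m z = D0J *m z + E *m z by rewrite -mulmxDl /E addrC subrK.
have lowD0 z : b * norm2 z <= norm2 (D0J *m z).
  apply: sq_le; first exact: norm2_ge0.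
  by rewrite exprMn bb; case: (rip z).
have upD0 z : norm2 (D0J *m z) <= a * norm2 z.
  apply: sq_le; first by rewrite mulr_ge0 // norm2_ge0.
  by rewrite exprMn aa; case: (rip z).
have upE z : norm2 (E *m z) <= t' * norm2 z.
  apply: sq_le; first by rewrite mulr_ge0 // norm2_ge0.
  apply: le_trans (norm2_mul_le E z) _; rewrite exprMn ler_wpM2r ?sqr_ge0 //.
  exact: frob_err.
have lowD z : (b - t') * norm2 z <= norm2 (DJ *m z).
  have : norm2 (D0J *m z) <= norm2 (DJ *m z) + norm2 (E *m z).
    have -> : D0J *m z = DJ *m z + - (E *m z) by rewrite DJE addrK.
    by apply: le_trans (norm2_triangle _ _) _; rewrite norm2_opp.
  have := lowD0 z; have := upE z; lra.
have upD z : norm2 (DJ *m z) <= (a + t') * norm2 z.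
  rewrite DJE; apply: le_trans (norm2_triangle _ _) _.
  have := upD0 z; have := upE z; lra.
set s' := b - t.
have s'p : 0 < s' by rewrite subr_gt0.
have Ce : Ct D0 k t = s'^-1 by [].
rewrite Ce.
have Cp : 0 < s'^-1 by rewrite invr_gt0.
have s'C : s' * s'^-1 = 1 by rewrite mulfV // gt_eqF.
have nz0 z : norm2 z = 0 -> z = 0 := @norm2_eq0 R _ z.
have lowD' z : s' * norm2 z <= norm2 (DJ *m z).
  apply: le_trans (lowD z); rewrite ler_wpM2r ?norm2_ge0 // /s'; lra.
set M := DJ^T *m DJ.
have Msym : M^T = M by rewrite /M trmx_mul trmxK.
have quad x : norm2 (DJ *m x) ^+ 2 = dot x (M *m x).
  by rewrite norm2_sq dot_mull /M mulmxA.
have Mu : M \in unitmx.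
  rewrite unitmxE unitfE; apply/negP => /det0P [w wn0 wM].
  have Mx : M *m w^T = 0 by rewrite -Msym -trmx_mul wM trmx0.
  have h0 : norm2 (DJ *m w^T) = 0.
    apply/eqP; rewrite -sqrf_eq0 quad Mx dotE big1 // => i _; by rewrite !mxE mulr0.
  have := lowD' w^T; rewrite h0 => h.
  have : norm2 w^T = 0 by have := norm2_ge0 w^T; nra.
  move/nz0 => /(congr1 trmx); rewrite trmxK trmx0 => w0.
  by move: wn0; rewrite w0 eqxx.
have MTh : M *m Theta = 1%:M by rewrite /Theta mulmxV.
have keyx y : norm2 y = 1 -> norm2 (DJ *m (Theta *m y)) ^+ 2 <= norm2 (Theta *m y).
  move=> hy; rewrite quad mulmxA MTh mul1mx.
  by apply: le_trans (dot_le _ _) _; rewrite hy mulr1.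
split; first exact: Mu.
split; first exact: spec_tr.
split.
  apply: spec_le; first exact: ltW.
  move=> x hx; apply: le_trans (upD x) _; rewrite hx mulr1.
  rewrite -[a + t']mulr1 -s'C mulrA -[X in _ <= X]mul1r.
  apply: ler_wpM2r; first by rewrite invr_ge0 ltW.
  have h1 : (a * b) ^+ 2 <= 1 by rewrite exprMn aa bb; nra.
  have h2 : a * b <= 1 by apply: sq_le => //; rewrite expr1n.
  have h3 : b <= a by apply: sq_le => //; rewrite aa bb; lra.
  have h4 : 0 <= (t - t') * b by rewrite mulr_ge0 // subr_ge0.
  have h5 : 0 <= t * (a - b) by rewrite mulr_ge0 ?subr_ge0 // (le_trans t0 tt).
  have h6 : 0 <= t' * t by rewrite mulr_ge0 // (le_trans t0 tt).
  rewrite /s'; nra.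
split.
  apply: spec_le; first by rewrite sqr_ge0.
  move=> y hy; set nx := norm2 (Theta *m y).
  have h1 := keyx y hy; have h2 := lowD' (Theta *m y); rewrite -/nx in h1 h2.
  have nx0 : 0 <= nx by apply: norm2_ge0.
  have h3 : s' ^+ 2 * nx <= 1.
    have h4 : s' ^+ 2 * nx ^+ 2 <= nx.
      have hsn : 0 <= s' * nx by rewrite mulr_ge0 // ltW.
      have hn := norm2_ge0 (DJ *m (Theta *m y)).
      nra.
    have [->|nxp] := eqVneq nx 0; first by rewrite mulr0.
    have : 0 < nx by rewrite lt_def nxp nx0.
    nra.
  have -> : nx = s' ^+ 2 * nx * s'^-1 ^+ 2.
    by rewrite mulrAC -exprMn s'C expr1n mul1r.
  by rewrite -[X in _ <= X]mul1r ler_wpM2r ?sqr_ge0.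
apply: spec_le; first exact: ltW.
move=> y hy; rewrite -mulmxA; set n := norm2 (DJ *m (Theta *m y)).
have h1 := keyx y hy; have h2 := lowD' (Theta *m y); rewrite -/n in h1 h2.
have n0 : 0 <= n by apply: norm2_ge0.
have h3 : s' * n <= 1.
  have [->|np] := eqVneq n 0; first by rewrite mulr0.
  have : 0 < n by rewrite lt_def np n0.
  nra.
have -> : n = s' * n * s'^-1 by rewrite mulrAC s'C mul1r.
rewrite -[X in _ <= X]mul1r; apply: ler_wpM2r => //; by rewrite invr_ge0 ltW.
Qed.
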